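(* Let $X$ be a metrizable space and $A\subset X$. Then the discretization $X_A$ of $X$ by $A$ has a regular base at non-isolated points.
   Context: The discretization $X_A$ is the set $X$ with the topology generated by the base $\{U: U \text{ open in } X\}\cup\{\{x\}:x\in A\}$. A base $\mathcal{B}$ is regular at $x$ if for every neighborhood $U$ of $x$ there is an open $V$ with $x\in V\subset U$ such that $\{B\in\mathcal{B}: B\cap V\neq\emptyset,\ B\not\subset U\}$ is finite; a regular base at non-isolated points is regular at every non-isolated point. *)

(* Defs.v *)
From Stdlib Require Import Reals List.
Open Scope R_scope.

Definition is_topology {X : Type} (op : (X -> Prop) -> Prop) : Prop :=
  op (fun _ => True) /\
  (forall U V, op U -> op V -> op (fun x => U x /\ V x)) /\
  (forall F : (X -> Prop) -> Prop, (forall U, F U -> op U) ->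
     op (fun x => exists U, F U /\ U x)).

Definition subset {X : Type} (U V : X -> Prop) : Prop := forall x, U x -> V x.

Definition is_metric {X : Type} (d : X -> X -> R) : Prop :=
  (forall x y, 0 <= d x y) /\
  (forall x y, d x y = 0 <-> x = y) /\
  (forall x y, d x y = d y x) /\
  (forall x y z, d x z <= d x y + d y z).

Definition metric_open {X : Type} (d : X -> X -> R) (U : X -> Prop) : Prop :=
  forall x, U x -> exists eps, 0 < eps /\ subset (fun y => d x y < eps) U.

Definition metrizable {X : Type} (op : (X -> Prop) -> Prop) : Prop :=
  exists d, is_metric d /\ forall U, op U <-> metric_open d U.

Definition is_base {X : Type} (op : (X -> Prop) -> Prop) (B : (X -> Prop) -> Prop) : Prop :=
  (forall b, B b -> op b) /\
  (forall U x, op U -> U x -> exists b, B b /\ b x /\ subset b U).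

Definition generated_topology {X : Type} (B : (X -> Prop) -> Prop) (U : X -> Prop) : Prop :=
  forall x, U x -> exists b, B b /\ b x /\ subset b U.

Definition discr_base {X : Type} (op : (X -> Prop) -> Prop) (A : X -> Prop)
  (b : X -> Prop) : Prop :=
  op b \/ exists x, A x /\ b = (fun y => y = x).

Definition discretization {X : Type} (op : (X -> Prop) -> Prop) (A : X -> Prop)
  : (X -> Prop) -> Prop :=
  generated_topology (discr_base op A).

Definition isolated {X : Type} (op : (X -> Prop) -> Prop) (x : X) : Prop :=
  op (fun y => y = x).

Definition neighborhood {X : Type} (op : (X -> Prop) -> Prop) (x : X) (U : X -> Prop) : Prop :=
  exists W, op W /\ W x /\ subset W U.

Definition finite_family {X : Type} (F : (X -> Prop) -> Prop) : Prop :=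
  exists l : list (X -> Prop), forall b, F b -> In b l.

Definition regular_at {X : Type} (op : (X -> Prop) -> Prop) (B : (X -> Prop) -> Prop)
  (x : X) : Prop :=
  forall U, neighborhood op x U ->
    exists V, op V /\ V x /\ subset V U /\
      finite_family (fun b => B b /\ (exists y, b y /\ V y) /\ ~ subset b U).

Definition regular_base_at_nonisolated {X : Type} (op : (X -> Prop) -> Prop) : Prop :=
  exists B, is_base op B /\ forall x, ~ isolated op x -> regular_at op B x.

(* Main.v *)
Require Import Defs.
From Stdlib Require Import Reals List.
From mathcomp Require ssreflect ssrfun ssrbool eqtype ssrnat seq boolp wochoice.
Module WO.
Import ssreflect ssrfun ssrbool eqtype ssrnat seq boolp wochoice.
Lemma wo_exists_eq (T : eqType) : exists R : T -> T -> Prop,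
  (forall P : T -> Prop, (exists x, P x) -> exists z, P z /\ forall y, P y -> R z y) /\
  (forall s t, R s t \/ R t s) /\ (forall s t, R s t -> R t s -> s = t).
Proof.
have [R wR] := @well_ordering_principle T.
exists (fun s t => R s t); split; [|split].
- move=> P [x Px].
  have [|z [[zP zmin] _]] := wR [pred y | `[< P y >]].
    by exists x; rewrite inE; apply/asboolP.
  exists z; split; first by move: zP; rewrite inE => /asboolP.
  by move=> y Py; apply: zmin; rewrite inE; apply/asboolP.
- move=> s t.
  have [|z [[zP zmin] _]] := wR (pred2 s t); first by exists s; rewrite inE eqxx.
  move: zP; rewrite inE => /orP[/eqP zs|/eqP zs]; subst z.
  + by left; apply: zmin; rewrite inE eqxx orbT.
  + by right; apply: zmin; rewrite inE eqxx.
- have refl : forall s, R s s.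
    move=> s; have [|z [[zP zmin] _]] := wR (pred1 s); first by exists s; rewrite inE eqxx.
    by move: zP; rewrite inE => /eqP zs; subst z; apply: zmin; rewrite inE eqxx.
  move=> s t Rst Rts.
  have [|z [_ zu]] := wR (pred2 s t); first by exists s; rewrite inE eqxx.
  have e1 : z = s.
    apply: zu; split; first by rewrite inE eqxx.
    by move=> y; rewrite inE => /orP[/eqP->|/eqP->].
  have e2 : z = t.
    apply: zu; split; first by rewrite inE eqxx orbT.
    by move=> y; rewrite inE => /orP[/eqP->|/eqP->].
  by rewrite -e1 -e2.
Qed.
Lemma wo_exists (X : Type) : exists R : X -> X -> Prop,
  (forall P : X -> Prop, (exists x, P x) -> exists z, P z /\ forall y, P y -> R z y) /\
  (forall s t, R s t \/ R t s) /\ (forall s t, R s t -> R t s -> s = t).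
Proof. exact: (@wo_exists_eq {classic X}). Qed.
End WO.
From Stdlib Require Import Reals List Lia Lra ClassicalEpsilon Classical.
Open Scope R_scope.

Definition rho (k : nat) : R := (/2)^k.

Lemma rho_pos k : 0 < rho k.
Proof. unfold rho; apply pow_lt; lra. Qed.

Lemma rho_S k : rho (S k) = rho k / 2.
Proof. unfold rho; simpl; field. Qed.

Lemma rho_mono N m : rho (N + m) <= rho N.
Proof.
induction m. rewrite Nat.add_0_r; lra.
rewrite Nat.add_succ_r, rho_S. pose proof (rho_pos (N+m)). lra.
Qed.

Lemma rho_le i N : (N <= i)%nat -> rho i <= rho N.
Proof. intros H. replace i with (N + (i - N))%nat by lia. apply rho_mono. Qed.

Lemma rho_small e : 0 < e -> exists k, rho k < e.
Proof.
intros He. destruct (pow_lt_1_zero (/2)) with (y := e) as [N HN]; auto.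
rewrite Rabs_pos_eq; lra.
exists N. specialize (HN N (le_n _)). rewrite Rabs_pos_eq in HN. exact HN.
apply pow_le; lra.
Qed.


Definition least {X} (d : X -> X -> R) (Rw : X -> X -> Prop) (r : R) (s p : X) : Prop :=
  d s p < r /\ forall t, d t p < r -> Rw s t.

Definition Dset {X} d Rw r (C : X -> Prop) (k : nat) (s p : X) : Prop :=
  least d Rw r s p /\ ~ C p /\ (forall y, d p y < 3 * rho k -> d s y < r).

Definition Vset {X} d Rw r (C : X -> Prop) k (s y : X) : Prop :=
  exists p, Dset d Rw r C k s p /\ d p y < rho k.

Fixpoint Cum {X} d Rw r (k : nat) : X -> Prop :=
  match k with
  | O => fun _ => False
  | S k => fun y => Cum d Rw r k y \/ exists t, Vset d Rw r (Cum d Rw r k) k t y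
  end.

Definition VV {X} d Rw r k (s : X) : X -> Prop := Vset d Rw r (Cum d Rw r k) k s.

Lemma met_tri {X} (d : X -> X -> R) : is_metric d -> forall x y z, d x z <= d x y + d y z.
Proof. intros (_&_&_&H); exact H. Qed.
Lemma met_sym {X} (d : X -> X -> R) : is_metric d -> forall x y, d x y = d y x.
Proof. intros (_&_&H&_); exact H. Qed.
Lemma met_pos {X} (d : X -> X -> R) : is_metric d -> forall x y, 0 <= d x y.
Proof. intros (H&_&_&_); exact H. Qed.
Lemma met_refl {X} (d : X -> X -> R) : is_metric d -> forall x, d x x = 0.
Proof. intros (_&H&_&_) x; apply H; reflexivity. Qed.

Lemma VV_sub {X} d Rw r k (s y : X) : VV d Rw r k s y -> d s y < r.
Proof.
intros (p & (_ & _ & Hb) & Hp). apply Hb. pose proof (rho_pos k). lra.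
Qed.

Lemma VV_open {X} d Rw r k (s y : X) : is_metric d -> VV d Rw r k s y ->
  exists e, 0 < e /\ forall z, d y z < e -> VV d Rw r k s z.
Proof.
intros Hd (p & HD & Hp). exists (rho k - d p y). split. lra.
intros z Hz. exists p. split; auto. pose proof (met_tri d Hd p y z). lra.
Qed.

Lemma Cum_mono {X} d Rw r k m (y : X) : Cum d Rw r k y -> Cum d Rw r (k + m) y.
Proof.
induction m; intros H. rewrite Nat.add_0_r; auto.
rewrite Nat.add_succ_r. simpl. left; auto.
Qed.

Lemma VV_Cum {X} d Rw r j k t (y : X) : (j < k)%nat -> VV d Rw r j t y -> Cum d Rw r k y.
Proof.
intros Hjk H. replace k with (S j + (k - S j))%nat by lia. apply Cum_mono.
simpl. right. exists t. exact H.
Qed.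

Lemma Cum_VV {X} d Rw r k (y : X) : Cum d Rw r k y -> exists j t, (j < k)%nat /\ VV d Rw r j t y.
Proof.
induction k; simpl. tauto.
intros [H|[t H]]. destruct (IHk H) as (j&t&?&?). exists j, t; split; auto.
exists k, t; split; auto.
Qed.

Definition wo_hyp {X} (Rw : X -> X -> Prop) : Prop :=
  (forall P : X -> Prop, (exists x, P x) -> exists z, P z /\ forall y, P y -> Rw z y) /\
  (forall s t, Rw s t \/ Rw t s) /\ (forall s t, Rw s t -> Rw t s -> s = t).

Lemma VV_cover {X} d Rw r (p : X) : is_metric d -> wo_hyp Rw -> 0 < r ->
  exists k s, VV d Rw r k s p.
Proof.
intros Hd (Hl & _ & _) Hr.
destruct (Hl (fun s => d s p < r)) as (s & Hs & Hmin).
  exists p. rewrite (met_refl d Hd). auto.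
destruct (rho_small ((r - d s p) / 3)) as [k Hk]. lra.
destruct (classic (Cum d Rw r k p)) as [HC|HC].
- destruct (Cum_VV d Rw r k p HC) as (j&t&_&H). eauto.
- exists k, s. exists p. split.
  + split. split; auto. split; auto.
    intros y Hy. pose proof (met_tri d Hd s p y). lra.
  + rewrite (met_refl d Hd). apply rho_pos.
Qed.

Lemma VV_disc {X} d Rw r k (s t x y : X) : is_metric d -> wo_hyp Rw -> s <> t ->
  VV d Rw r k s x -> VV d Rw r k t y -> rho k <= d x y.
Proof.
intros Hd (_ & Htot & Hanti) Hst Hx Hy.
assert (G : forall s t x y, s <> t -> Rw s t -> VV d Rw r k s x -> VV d Rw r k t y -> rho k <= d x y).
{ clear s t x y Hst Hx Hy.
  intros s t x y Hst Rst (p & ((Hsp & Hsm) & _ & Hb) & Hpx) (q & ((Htq & Htm) & _ & _) & Hqy).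
  assert (Hq : ~ d s q < r).
  { intros Hq. apply Hst. apply Hanti; auto. }
  assert (H3 : 3 * rho k <= d p q).
  { destruct (Rlt_or_le (d p q) (3 * rho k)) as [Hlt|]; auto. exfalso. apply Hq, Hb, Hlt. }
  pose proof (met_tri d Hd p x q). pose proof (met_tri d Hd x y q).
  pose proof (met_sym d Hd q y). lra. }
destruct (Htot s t) as [H|H].
- eapply G; eauto.
- rewrite (met_sym d Hd). apply (G t s y x); auto.
Qed.

Lemma VV_locfin {X} d Rw r (x : X) : is_metric d -> wo_hyp Rw -> 0 < r ->
  exists e, 0 < e /\ exists l : list (X -> Prop),
    forall k s, (exists y, VV d Rw r k s y /\ d x y < e) -> In (VV d Rw r k s) l.
Proof.
intros Hd Hw Hr.
destruct (VV_cover d Rw r x Hd Hw Hr) as (j & t & Hjt).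
destruct (VV_open d Rw r j t x Hd Hjt) as (e0 & He0 & Hball).
destruct (rho_small e0 He0) as [k Hk].
set (N := (j + k + 1)%nat).
set (ch := fun i => epsilon (inhabits x) (fun s => exists y, VV d Rw r i s y /\ d x y < rho N)).
exists (rho N). split. apply rho_pos.
exists (map (fun i => VV d Rw r i (ch i)) (seq 0 N)).
intros i s (y & Hy & Hxy).
destruct (Nat.lt_ge_cases i N) as [HiN|HiN].
- assert (Hch : exists y, VV d Rw r i (ch i) y /\ d x y < rho N).
  { unfold ch. apply epsilon_spec. exists s, y; auto. }
  destruct Hch as (y' & Hy' & Hxy').
  destruct (classic (s = ch i)) as [E|E].
  + rewrite E. apply in_map_iff. exists i. split; auto. apply in_seq. lia.
  + exfalso. pose proof (VV_disc d Rw r i s (ch i) y y' Hd Hw E Hy Hy').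
    pose proof (met_tri d Hd y x y'). pose proof (met_sym d Hd x y).
    assert (Hr1 : rho N <= rho (S i)) by (apply rho_le; unfold N; lia).
    rewrite rho_S in Hr1. lra.
- exfalso. destruct Hy as (p & (_ & HnC & _) & Hpy).
  apply HnC. apply (VV_Cum d Rw r j i t). lia.
  apply Hball.
  pose proof (met_tri d Hd x y p). pose proof (met_sym d Hd p y).
  assert (Hr1 : rho i <= rho (S k)) by (apply rho_le; unfold N in HiN; lia).
  assert (Hr2 : rho N <= rho (S k)) by (apply rho_le; unfold N; lia).
  rewrite rho_S in Hr1, Hr2. lra.
Qed.

Lemma levels_fin {X} d Rw (x : X) n : is_metric d -> wo_hyp Rw ->
  exists e, 0 < e /\ exists l : list (X -> Prop), forall m, (m < n)%nat -> forall k s,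
    (exists y, VV d Rw (rho m) k s y /\ d x y < e) -> In (VV d Rw (rho m) k s) l.
Proof.
intros Hd Hw. induction n.
- exists 1. split. lra. exists nil. intros; lia.
- destruct IHn as (e1 & He1 & l1 & Hl1).
  destruct (VV_locfin d Rw (rho n) x Hd Hw (rho_pos n)) as (e2 & He2 & l2 & Hl2).
  exists (Rmin e1 e2). split. apply Rmin_pos; auto.
  exists (l1 ++ l2). intros m Hm k s (y & Hy & Hxy). apply in_or_app.
  destruct (Nat.lt_ge_cases m n) as [H|H].
  + left. apply Hl1; auto. exists y. split; auto. pose proof (Rmin_l e1 e2). lra.
  + right. assert (m = n) by lia. subst m. apply Hl2. exists y. split; auto.
    pose proof (Rmin_r e1 e2). lra.
Qed.

Lemma ball_open {X} (d : X -> X -> R) x e : is_metric d -> metric_open d (fun y => d x y < e).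
Proof.
intros Hd y Hy. exists (e - d x y). split. lra. intros z Hz. simpl in *.
pose proof (met_tri d Hd x y z). lra.
Qed.

Lemma tau_of_op {X} (op : (X -> Prop) -> Prop) A U : op U -> discretization op A U.
Proof. intros H x Hx. exists U. split. left; auto. split; auto. intros y; auto. Qed.

Lemma nbhd_ball {X} (op : (X -> Prop) -> Prop) d A (x : X) U :
  (forall U, op U <-> metric_open d U) ->
  ~ isolated (discretization op A) x -> neighborhood (discretization op A) x U ->
  exists e, 0 < e /\ forall y, d x y < e -> U y.
Proof.
intros Hop Hni (W & HW & Wx & WU).
destruct (HW x Wx) as (b & Hb & bx & bW).
destruct Hb as [Hb | (a & Aa & E)].
- apply Hop in Hb. destruct (Hb x bx) as (e & He & Hs). exists e. split; auto.
- exfalso. apply Hni. subst b. subst a. intros y Hy. exists (fun z => z = y).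
  split. right. exists x. subst y. auto. split; auto. intros z Hz; subst; auto.
Qed.

Theorem mainTheorem12 (X : Type) (op : (X -> Prop) -> Prop)
  (Htop : is_topology op) (Hmet : metrizable op) (A : X -> Prop) :
  regular_base_at_nonisolated (discretization op A).
Proof.
destruct Hmet as (d & Hd & Hop).
destruct (WO.wo_exists X) as (Rw & Hw).
assert (Hw' : wo_hyp Rw) by exact Hw.
assert (VVtau : forall m k s, discretization op A (VV d Rw (rho m) k s)).
{ intros m k s. apply tau_of_op. apply Hop. intros y Hy.
  destruct (VV_open d Rw (rho m) k s y Hd Hy) as (e & He & H). exists e; split; auto. }
exists (fun b => (exists a, A a /\ b = fun y => y = a) \/
            exists m k s, b = VV d Rw (rho m) k s).
split; [split|].
- intros b [(a & Aa & E) | (m & k & s & E)]; subst b.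
  + intros y Hy. exists (fun z => z = a). split. right. eauto. split; auto. intros z; auto.
  + apply VVtau.
- intros U x HU Ux. destruct (HU x Ux) as (b & Hb & bx & bU).
  destruct Hb as [Hb | (a & Aa & E)].
  + apply Hop in Hb. destruct (Hb x bx) as (e & He & Hs).
    destruct (rho_small e He) as [m Hm].
    destruct (VV_cover d Rw (rho (S m)) x Hd Hw' (rho_pos _)) as (k & s & Hks).
    exists (VV d Rw (rho (S m)) k s). split. right. eauto. split; auto.
    intros y Hy. apply bU, Hs.
    pose proof (VV_sub _ _ _ _ _ _ Hks). pose proof (VV_sub _ _ _ _ _ _ Hy).
    pose proof (met_tri d Hd x s y). pose proof (met_sym d Hd x s).
    rewrite rho_S in *. lra.
  + exists b. split. left. eauto. split; auto.
- intros x Hni U HU.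
  destruct (nbhd_ball op d A x U Hop Hni HU) as (eps & Heps & HUb).
  destruct (rho_small (eps / 2)) as [M HM]. lra.
  destruct (levels_fin d Rw x (S M) Hd Hw') as (e & He & l & Hl).
  set (del := Rmin e (eps / 2)).
  assert (Hdel : 0 < del) by (apply Rmin_pos; lra).
  exists (fun y => d x y < del). split; [|split; [|split]].
  + apply tau_of_op, Hop, ball_open; auto.
  + simpl. rewrite (met_refl d Hd). auto.
  + intros y Hy. apply HUb. pose proof (Rmin_r e (eps/2)). unfold del in Hy. lra.
  + exists l. intros b (Hb & (y & by_ & Vy) & nsub).
    destruct Hb as [(a & Aa & E) | (m & k & s & E)]; subst b.
    * exfalso. apply nsub. intros z Hz. simpl in Hz, by_. subst z y.
      apply HUb. pose proof (Rmin_r e (eps/2)). unfold del in Vy. lra.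
    * destruct (Nat.lt_ge_cases m (S M)) as [Hm|Hm].
      -- apply Hl; auto. exists y. split; auto. pose proof (Rmin_l e (eps/2)). unfold del in Vy. lra.
      -- exfalso. apply nsub. intros z Hz. apply HUb.
         pose proof (VV_sub _ _ _ _ _ _ by_). pose proof (VV_sub _ _ _ _ _ _ Hz).
         pose proof (met_tri d Hd x y z). pose proof (met_tri d Hd y s z).
         pose proof (met_sym d Hd y s).
         assert (Hr : rho m <= rho (S M)) by (apply rho_le; lia).
         rewrite rho_S in Hr. pose proof (Rmin_r e (eps/2)). unfold del in Vy. lra.
Qed.
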